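(* Let $c_1,\dots,c_k\in(0,\infty)$ be fixed constants. With probability one, there exists a tuning parameter $\lambda\in(0,\infty)^k$ such that $$\frac{\lambda}{2g'(\|Y-X\hat\beta^\lambda\|_2^2)}=\Big(c_1\|(XP_1M_1^{+})^\top\varepsilon\|_{q_1}^*,\dots,c_k\|(XP_kM_k^{+})^\top\varepsilon\|_{q_k}^*\Big)^\top.$$
   Context: Standing setup. Model: $Y=X\beta^*+\varepsilon$ with $Y\in\mathbb{R}^n$, $X\in\mathbb{R}^{n\times p}$, $\beta^*\in\mathbb{R}^p$, $\varepsilon\in\mathbb{R}^n$ (random; no distributional assumptions beyond those below). Link function $g:\mathbb{R}\to[0,\infty)$ with $g(0)=0$, $g$ continuous and strictly increasing on $[0,\infty)$, continuously differentiable on $(0,\infty)$ with strictly positive and non-increasing derivative $g'$, and such that $\alpha\mapsto g(\|\alpha\|_2^2)$ is strictly convex on $\mathbb{R}^n$. Penalty: $k\ge1$, matrices $M_1,\dots,M_k\in\mathbb{R}^{p\times p}$ with $\bigcap_{j=1}^k\mathrm{Ker}(M_j)=\{0\}$, exponents $q_j\ge1$, $\|\cdot\|_{q_j}$ the $\ell_{q_j}$-norm on $\mathbb{R}^p$, and $\|\cdot\|_{q_j}^*$ its dual norm. For $\lambda\in(0,\infty)^k$, $\hat\beta^\lambda$ denotes any element of $\arg\min_{\beta\in\mathbb{R}^p}\{g(\|Y-X\beta\|_2^2)+\sum_{j=1}^k\lambda_j\|M_j\beta\|_{q_j}\}$ (the quantity $\|Y-X\hat\beta^\lambda\|_2^2$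 does not depend on which minimizer is chosen). $A^+$ denotes the Moore–Penrose pseudoinverse; $P_1,\dots,P_k\in\mathbb{R}^{p\times p}$ are fixed projection matrices with $\sum_{j=1}^kP_jM_j^+M_j=I_{p\times p}$. Noise assumption: with probability one, $Y\neq0$ and $\min_{j}\|(XP_jM_j^{+})^\top\varepsilon\|_{q_j}^*>0$. *)

(* Defs.v *)
(* classical reals. Vectors in R^n are functions nat -> R of which
   only the indices < n matter; matrices are functions nat -> nat -> R. *)
From Stdlib Require Import Reals Lra Lia ClassicalEpsilon.
Open Scope R_scope.

Definition vec := nat -> R.
Definition mat := nat -> nat -> R.

Fixpoint rsum (n : nat) (f : nat -> R) : R :=
  match n with O => 0 | S m => rsum m f + f m end.

Definition mv (n : nat) (A : mat) (x : vec) : vec :=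
  fun i => rsum n (fun j => A i j * x j).
Definition mm (n : nat) (A B : mat) : mat :=
  fun i j => rsum n (fun l => A i l * B l j).
Definition tr (A : mat) : mat := fun i j => A j i.
Definition idm : mat := fun i j => if Nat.eqb i j then 1 else 0.

Definition mat_eq (m n : nat) (A B : mat) : Prop :=
  forall i j, (i < m)%nat -> (j < n)%nat -> A i j = B i j.

Definition dot (n : nat) (x y : vec) : R := rsum n (fun i => x i * y i).
Definition sqnorm2 (n : nat) (x : vec) : R := dot n x x.

Definition powr (x q : R) : R := if Rlt_dec 0 x then Rpower x q else 0.

Definition lqnorm (n : nat) (q : R) (x : vec) : R :=
  powr (rsum n (fun i => powr (Rabs (x i)) q)) (/ q).

Definition dualnorm (n : nat) (q : R) (v : vec) : R :=
  epsilon (inhabits 0)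
    (fun d => is_lub (fun t => exists x : vec, lqnorm n q x <= 1 /\ t = dot n v x) d).

Definition is_pinv (m n : nat) (A Ap : mat) : Prop :=
  mat_eq m n (mm m (mm n A Ap) A) A /\
  mat_eq n m (mm n (mm m Ap A) Ap) Ap /\
  mat_eq m m (tr (mm n A Ap)) (mm n A Ap) /\
  mat_eq n n (tr (mm m Ap A)) (mm m Ap A).

Definition msum (k : nat) (F : nat -> mat) : mat :=
  fun i j => rsum k (fun l => F l i j).

Definition resid (n p : nat) (X : mat) (Y b : vec) : R :=
  sqnorm2 n (fun i => Y i - mv p X b i).

Definition objective (n p k : nat) (g : R -> R) (X : mat) (Y : vec)
  (M : nat -> mat) (q : nat -> R) (lam : vec) (b : vec) : R :=
  g (resid n p X Y b) + rsum k (fun j => lam j * lqnorm p (q j) (mv p (M j) b)).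

Definition is_minimizer (n p k : nat) (g : R -> R) (X : mat) (Y : vec)
  (M : nat -> mat) (q : nat -> R) (lam : vec) (b : vec) : Prop :=
  forall b' : vec, objective n p k g X Y M q lam b <= objective n p k g X Y M q lam b'.

(* Main.v *)
Require Import Defs.
From Stdlib Require Import Reals Lra Lia Classical ClassicalEpsilon List.
From Coquelicot Require Import Compactness.
Open Scope R_scope.

Lemma rsum_ext n f g : (forall i, (i < n)%nat -> f i = g i) -> rsum n f = rsum n g.
Proof. induction n; simpl; intros H; auto. rewrite IHn by (intros; apply H; lia). rewrite H by lia. auto. Qed.

Lemma rsum_plus n f g : rsum n (fun i => f i + g i) = rsum n f + rsum n g.
Proof. induction n; simpl; [lra|]. rewrite IHn; lra. Qed.

Lemma rsum_scal n c f : rsum n (fun i => c * f i) = c * rsum n f.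
Proof. induction n; simpl; [lra|]. rewrite IHn; lra. Qed.

Lemma rsum_zero n f : (forall i, (i < n)%nat -> f i = 0) -> rsum n f = 0.
Proof. intros H. rewrite (rsum_ext n f (fun _ => 0)) by auto. induction n; simpl; auto. rewrite IHn by (intros; apply H; lia). lra. Qed.

Lemma rsum_le n f g : (forall i, (i < n)%nat -> f i <= g i) -> rsum n f <= rsum n g.
Proof. induction n; simpl; intros H; [lra|]. assert (f n <= g n) by (apply H; lia).
 assert (rsum n f <= rsum n g) by (apply IHn; intros; apply H; lia). lra. Qed.

Lemma rsum_nonneg n f : (forall i, (i < n)%nat -> 0 <= f i) -> 0 <= rsum n f.
Proof. intros H. rewrite <- (rsum_zero n (fun _ => 0)) by auto. apply rsum_le; auto. Qed.

Lemma rsum_term n f l : (forall i, (i < n)%nat -> 0 <= f i) -> (l < n)%nat -> f l <= rsum n f.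
Proof. induction n; simpl; intros H Hl; [lia|].
 assert (0 <= f n) by (apply H; lia).
 assert (0 <= rsum n f) by (apply rsum_nonneg; intros; apply H; lia).
 destruct (Nat.eq_dec l n). subst; lra.
 assert (f l <= rsum n f) by (apply IHn; [intros; apply H; lia| lia]). lra. Qed.

Lemma rsum_abs n f : Rabs (rsum n f) <= rsum n (fun i => Rabs (f i)).
Proof. induction n; simpl. rewrite Rabs_R0; lra.
 eapply Rle_trans. apply Rabs_triang. lra. Qed.

Lemma rsum_swap n m (f : nat -> nat -> R) :
  rsum n (fun i => rsum m (fun j => f i j)) = rsum m (fun j => rsum n (fun i => f i j)).
Proof. induction n; simpl. symmetry; apply rsum_zero; auto.
 rewrite IHn. rewrite <- rsum_plus. auto. Qed.

Lemma rsum_delta n i (f : nat -> R) : (i < n)%nat -> rsum n (fun m => idm i m * f m) = f i.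
Proof. induction n; simpl; intros H; [lia|]. unfold idm at 2.
 destruct (Nat.eq_dec i n).
 - subst. rewrite Nat.eqb_refl. rewrite rsum_zero. lra. intros j Hj. unfold idm.
   destruct (Nat.eqb_spec n j); [lia|lra].
 - rewrite IHn by lia. destruct (Nat.eqb_spec i n); [lia|lra]. Qed.

Lemma mv_lin p A a b u w i : mv p A (fun l => a * u l + b * w l) i = a * mv p A u i + b * mv p A w i.
Proof. unfold mv. rewrite <- !rsum_scal, <- rsum_plus. apply rsum_ext; intros; ring. Qed.

Lemma mv_ext p A u w i : (forall l, (l < p)%nat -> u l = w l) -> mv p A u i = mv p A w i.
Proof. intros H; unfold mv; apply rsum_ext; intros; rewrite H; auto. Qed.

Lemma sqnorm2_ext n u w : (forall i, (i < n)%nat -> u i = w i) -> sqnorm2 n u = sqnorm2 n w.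
Proof. intros H; unfold sqnorm2, dot; apply rsum_ext; intros; rewrite H; auto. Qed.

Lemma sqnorm2_nonneg n u : 0 <= sqnorm2 n u.
Proof. apply rsum_nonneg; intros; apply Rle_0_sqr. Qed.


Lemma powr_pos x q : 0 < x -> powr x q = Rpower x q.
Proof. intros H; unfold powr; destruct (Rlt_dec 0 x); [auto|lra]. Qed.
Lemma powr_nonpos x q : x <= 0 -> powr x q = 0.
Proof. intros H; unfold powr; destruct (Rlt_dec 0 x); [lra|auto]. Qed.
Lemma Rpower_pos x q : 0 < Rpower x q.
Proof. unfold Rpower; apply exp_pos. Qed.
Lemma powr_nonneg x q : 0 <= powr x q.
Proof. unfold powr; destruct (Rlt_dec 0 x); [left; apply Rpower_pos|lra]. Qed.
Lemma powr_lt x y q : 0 < q -> 0 <= x < y -> powr x q < powr y q.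
Proof. intros Hq [H1 H2]. rewrite (powr_pos y) by lra. destruct (Req_dec x 0).
 subst; rewrite powr_nonpos by lra; apply Rpower_pos.
 rewrite powr_pos by lra; apply Rlt_Rpower_l; lra. Qed.
Lemma powr_le x y q : 0 < q -> 0 <= x <= y -> powr x q <= powr y q.
Proof. intros Hq [H1 H2]. destruct H2 as [H2|H2]. left; apply powr_lt; [exact Hq|split; assumption]. subst; apply Rle_refl. Qed.
Lemma powr_inv x q : 0 < q -> 0 <= x -> powr (powr x q) (/ q) = x.
Proof. intros Hq Hx. destruct (Req_dec x 0). subst. rewrite (powr_nonpos 0 q) by lra; rewrite powr_nonpos; lra.
 rewrite (powr_pos x q) by lra. rewrite powr_pos by apply Rpower_pos.
 rewrite Rpower_mult. replace (q * / q) with 1 by (field; lra). apply Rpower_1; lra. Qed.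
Lemma powr_inv' x q : 0 < q -> 0 <= x -> powr (powr x (/q)) q = x.
Proof. intros Hq Hx. rewrite <- (Rinv_inv q) at 2. apply powr_inv; auto. apply Rinv_0_lt_compat; auto. Qed.
Lemma powr_mul a b q : 0 <= a -> 0 <= b -> powr (a * b) q = powr a q * powr b q.
Proof. intros Ha Hb. destruct (Req_dec a 0). subst; rewrite Rmult_0_l, !(powr_nonpos 0) by lra; ring.
 destruct (Req_dec b 0). subst; rewrite Rmult_0_r, !(powr_nonpos 0) by lra; ring.
 rewrite !powr_pos by (try apply Rmult_lt_0_compat; lra). rewrite Rpower_mult_distr; auto; lra. Qed.
Lemma powr_zero x q : 0 < q -> 0 <= x -> powr x q = 0 -> x = 0.
Proof. intros Hq Hx H. destruct (Req_dec x 0); auto. rewrite powr_pos in H by lra.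
 pose proof (Rpower_pos x q); lra. Qed.
Lemma powr_one x : 0 <= x -> powr x 1 = x.
Proof. intros Hx. destruct (Req_dec x 0). subst; apply powr_nonpos; lra. rewrite powr_pos by lra. apply Rpower_1; lra. Qed.

Lemma Rpower_tangent q m y : 1 <= q -> 0 < m -> 0 < y ->
  Rpower m q + q * Rpower m (q - 1) * (y - m) <= Rpower y q.
Proof. intros Hq Hm Hy.
 destruct (Rtotal_order m y) as [Hlt|[Heq|Hgt]].
 - destruct (MVT_cor2 (fun x => Rpower x q) (fun x => q * Rpower x (q - 1)) m y Hlt) as [c [Hc1 Hc2]].
   { intros c Hc; apply derivable_pt_lim_power; lra. }
   assert (Rpower m (q-1) <= Rpower c (q-1)) by (apply Rle_Rpower_l; lra).
   assert (0 <= y - m) by lra. simpl in Hc1.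
   assert (0 <= q * (y - m) * (Rpower c (q-1) - Rpower m (q-1))) by (apply Rmult_le_pos; [apply Rmult_le_pos|]; lra).
   nra.
 - subst; lra.
 - destruct (MVT_cor2 (fun x => Rpower x q) (fun x => q * Rpower x (q - 1)) y m Hgt) as [c [Hc1 Hc2]].
   { intros c Hc; apply derivable_pt_lim_power; lra. }
   assert (Rpower c (q-1) <= Rpower m (q-1)) by (apply Rle_Rpower_l; lra).
   assert (0 <= m - y) by lra. simpl in Hc1.
   assert (0 <= q * (m - y) * (Rpower m (q-1) - Rpower c (q-1))) by (apply Rmult_le_pos; [apply Rmult_le_pos|]; lra).
   nra. Qed.

Lemma powr_tangent q m y : 1 <= q -> 0 < m -> 0 <= y ->
  powr m q + q * Rpower m (q - 1) * (y - m) <= powr y q.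
Proof. intros Hq Hm Hy. rewrite powr_pos by lra. destruct (Req_dec y 0).
 - subst. rewrite powr_nonpos by lra.
   assert (Rpower m (q-1) * m = Rpower m q).
   { rewrite <- (Rpower_1 m) at 2 by lra. rewrite <- Rpower_plus. f_equal; ring. }
   pose proof (Rpower_pos m q). nra.
 - rewrite (powr_pos y) by lra. apply Rpower_tangent; lra. Qed.

Lemma powr_convex q a b t : 1 <= q -> 0 <= a -> 0 <= b -> 0 <= t <= 1 ->
  powr (t * a + (1 - t) * b) q <= t * powr a q + (1 - t) * powr b q.
Proof. intros Hq Ha Hb Ht. set (m := t * a + (1 - t) * b).
 destruct (Req_dec m 0) as [Hm|Hm].
 - rewrite Hm, powr_nonpos by lra. pose proof (powr_nonneg a q); pose proof (powr_nonneg b q). nra.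
 - assert (Hm0 : 0 <= m) by (unfold m; nra).
   assert (0 < m) by (destruct Hm0 as [?|Hm0]; [auto|exfalso; apply Hm; auto]).
   pose proof (powr_tangent q m a Hq H Ha). pose proof (powr_tangent q m b Hq H Hb).
   set (D := q * Rpower m (q - 1)) in *.
   assert (t * (powr m q + D * (a - m)) + (1 - t) * (powr m q + D * (b - m)) = powr m q)
     by (unfold m; ring). nra. Qed.

Lemma powr_cont q x : 0 < q -> continuity_pt (fun y => powr y q) x.
Proof. intros Hq. unfold continuity_pt, continue_in, limit1_in, limit_in; simpl; unfold R_dist.
 intros eps Heps. destruct (Rtotal_order x 0) as [Hx|[Hx|Hx]].
 - exists (- x); split; [lra|]. intros y [_ Hy]. rewrite !powr_nonpos.
   rewrite Rminus_0_r, Rabs_R0; lra. lra. apply Rabs_def2 in Hy; lra.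
 - subst. exists (Rpower eps (/ q)); split; [apply Rpower_pos|]. intros y [_ Hy].
   rewrite Rminus_0_r in Hy. rewrite (powr_nonpos 0) by lra. rewrite Rminus_0_r.
   rewrite Rabs_pos_eq by apply powr_nonneg.
   destruct (Rle_dec y 0). rewrite powr_nonpos; lra.
   rewrite Rabs_pos_eq in Hy by lra.
   assert (powr y q < powr (powr eps (/q)) q).
   { apply powr_lt; auto. rewrite powr_pos by lra. lra. }
   rewrite powr_inv' in H; lra.
 - assert (continuity_pt (fun y => Rpower y q) x).
   { apply derivable_continuous_pt. exists (q * Rpower x (q-1)). apply derivable_pt_lim_power; lra. }
   destruct (H eps Heps) as [alp [Halp H2]]. simpl in H2; unfold R_dist in H2.
   exists (Rmin alp x); split. apply Rmin_pos; lra.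
   intros y [_ Hy]. assert (Rabs (y - x) < alp) by (eapply Rlt_le_trans; [apply Hy| apply Rmin_l]).
   assert (Rabs (y - x) < x) by (eapply Rlt_le_trans; [apply Hy| apply Rmin_r]).
   apply Rabs_def2 in H1. rewrite !powr_pos by lra.
   destruct (Req_dec y x). subst. rewrite Rminus_eq_0, Rabs_R0; lra.
   apply H2. split; [split; [exact I| auto]| auto]. Qed.


Definition Sq p q (x : vec) := rsum p (fun i => powr (Rabs (x i)) q).

Lemma Sq_nonneg p q x : 0 <= Sq p q x.
Proof. apply rsum_nonneg; intros; apply powr_nonneg. Qed.

Lemma lq_nonneg p q x : 0 <= lqnorm p q x.
Proof. apply powr_nonneg. Qed.

Lemma lq_ext p q x y : (forall i, (i < p)%nat -> x i = y i) -> lqnorm p q x = lqnorm p q y.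
Proof. intros H; unfold lqnorm; f_equal; apply rsum_ext; intros; rewrite H; auto. Qed.

Lemma lq_S p q x : 0 < q -> powr (lqnorm p q x) q = Sq p q x.
Proof. intros Hq. unfold lqnorm. apply powr_inv'; auto. apply Sq_nonneg. Qed.

Lemma lq_coord p q x l : 0 < q -> (l < p)%nat -> Rabs (x l) <= lqnorm p q x.
Proof. intros Hq Hl. rewrite <- (powr_inv (Rabs (x l)) q) by (auto; apply Rabs_pos).
 unfold lqnorm. apply powr_le. apply Rinv_0_lt_compat; auto. split. apply powr_nonneg.
 apply (rsum_term p (fun i => powr (Rabs (x i)) q)); auto. intros; apply powr_nonneg. Qed.

Lemma lq_zero p q x : 0 < q -> lqnorm p q x = 0 -> forall i, (i < p)%nat -> x i = 0.
Proof. intros Hq H i Hi. pose proof (lq_coord p q x i Hq Hi). pose proof (Rabs_pos (x i)).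
 assert (Rabs (x i) = 0) by lra. destruct (Req_dec (x i) 0); auto. exfalso. pose proof (Rabs_pos_lt (x i) H3). lra. Qed.

Lemma lq_homog p q c x : 0 < q -> 0 <= c -> lqnorm p q (fun i => c * x i) = c * lqnorm p q x.
Proof. intros Hq Hc. unfold lqnorm.
 rewrite (rsum_ext p _ (fun i => powr c q * powr (Rabs (x i)) q)).
 2:{ intros; rewrite Rabs_mult, Rabs_pos_eq by lra. apply powr_mul; auto; apply Rabs_pos. }
 rewrite rsum_scal. rewrite powr_mul; [|apply powr_nonneg| apply rsum_nonneg; intros; apply powr_nonneg].
 rewrite powr_inv; auto. Qed.

Lemma lq_triangle p q x y : 1 <= q ->
  lqnorm p q (fun i => x i + y i) <= lqnorm p q x + lqnorm p q y.
Proof. intros Hq. set (A := lqnorm p q x). set (B := lqnorm p q y).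
 assert (HA : 0 <= A) by apply lq_nonneg. assert (HB : 0 <= B) by apply lq_nonneg.
 destruct (Req_dec A 0) as [A0|A0].
 { rewrite A0, Rplus_0_l. unfold B; right; apply lq_ext. intros i Hi.
   rewrite (lq_zero p q x) by (auto; lra). ring. }
 destruct (Req_dec B 0) as [B0|B0].
 { rewrite B0, Rplus_0_r. unfold A; right; apply lq_ext. intros i Hi.
   rewrite (lq_zero p q y) by (auto; lra). ring. }
 assert (A > 0) by lra. assert (B > 0) by lra.
 set (t := A / (A + B)).
 assert (Ht : 0 <= t <= 1). { unfold t; split. apply Rmult_le_pos; [lra| left; apply Rinv_0_lt_compat; lra].
   apply (Rmult_le_reg_r (A + B)). lra. unfold Rdiv. rewrite Rmult_assoc, Rinv_l by lra. lra. }
 assert (Key : forall i, powr (Rabs (x i) + Rabs (y i)) q <=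
     powr (A + B) q * (t * (powr (Rabs (x i)) q / powr A q) + (1 - t) * (powr (Rabs (y i)) q / powr B q))).
 { intros i.
   assert (E : Rabs (x i) + Rabs (y i) = (A + B) * (t * (Rabs (x i) / A) + (1 - t) * (Rabs (y i) / B)))
     by (unfold t; field; lra).
   rewrite E. rewrite powr_mul; [| lra|].
   2:{ pose proof (Rabs_pos (x i)); pose proof (Rabs_pos (y i)).
       apply Rplus_le_le_0_compat; apply Rmult_le_pos; try lra; apply Rmult_le_pos; try lra; left; apply Rinv_0_lt_compat; lra. }
   apply Rmult_le_compat_l. apply powr_nonneg.
   assert (Ex : powr (Rabs (x i) / A) q = powr (Rabs (x i)) q / powr A q).
   { assert (powr (Rabs (x i)) q = powr A q * powr (Rabs (x i) / A) q).
     { rewrite <- powr_mul. f_equal. field. lra. lra. unfold Rdiv; apply Rmult_le_pos; [apply Rabs_pos| left; apply Rinv_0_lt_compat; lra]. }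
     rewrite H1. field. rewrite powr_pos by lra. pose proof (Rpower_pos A q); lra. }
   assert (Ey : powr (Rabs (y i) / B) q = powr (Rabs (y i)) q / powr B q).
   { assert (powr (Rabs (y i)) q = powr B q * powr (Rabs (y i) / B) q).
     { rewrite <- powr_mul. f_equal. field. lra. lra. unfold Rdiv; apply Rmult_le_pos; [apply Rabs_pos| left; apply Rinv_0_lt_compat; lra]. }
     rewrite H1. field. rewrite powr_pos by lra. pose proof (Rpower_pos B q); lra. }
   rewrite <- Ex, <- Ey. apply powr_convex; auto.
   unfold Rdiv; apply Rmult_le_pos; [apply Rabs_pos| left; apply Rinv_0_lt_compat; lra].
   unfold Rdiv; apply Rmult_le_pos; [apply Rabs_pos| left; apply Rinv_0_lt_compat; lra]. }
 assert (HS : Sq p q (fun i => x i + y i) <= powr (A + B) q).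
 { unfold Sq. eapply Rle_trans.
   apply (rsum_le p _ (fun i => powr (Rabs (x i) + Rabs (y i)) q)).
   { intros i _. apply powr_le. lra. split. apply Rabs_pos. apply Rabs_triang. }
   eapply Rle_trans. apply rsum_le. intros i _. apply Key.
   set (pA := powr A q). set (pB := powr B q). set (pAB := powr (A + B) q).
   assert (pA > 0) by (unfold pA; rewrite powr_pos by lra; apply Rpower_pos).
   assert (pB > 0) by (unfold pB; rewrite powr_pos by lra; apply Rpower_pos).
   rewrite (rsum_ext p _ (fun i => (pAB * t / pA) * powr (Rabs (x i)) q + (pAB * (1 - t) / pB) * powr (Rabs (y i)) q)) by (intros; field; lra).
   rewrite rsum_plus, !rsum_scal. fold (Sq p q x). fold (Sq p q y).
   rewrite <- (lq_S p q x), <- (lq_S p q y) by lra. fold A B. fold pA pB.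
   right. field. lra. }
 rewrite <- (powr_inv (A + B) q) by lra. unfold lqnorm at 1. apply powr_le.
 apply Rinv_0_lt_compat; lra. split; [apply Sq_nonneg| exact HS]. Qed.


Definition vcont (p : nat) (F : vec -> R) := forall b eps, 0 < eps -> exists del, 0 < del /\
  forall b', (forall i, (i < p)%nat -> Rabs (b' i - b i) < del) -> Rabs (F b' - F b) < eps.

Lemma vcont_const p c : vcont p (fun _ => c).
Proof. intros b eps He. exists 1; split; [lra|]. intros. rewrite Rminus_diag, Rabs_R0; lra. Qed.

Lemma vcont_coord p l : (l < p)%nat -> vcont p (fun b => b l).
Proof. intros Hl b eps He. exists eps; split; auto. Qed.

Lemma vcont_plus p F G : vcont p F -> vcont p G -> vcont p (fun b => F b + G b).
Proof. intros HF HG b eps He. destruct (HF b (eps/2)) as [d1 [Hd1 H1]]; [lra|].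
 destruct (HG b (eps/2)) as [d2 [Hd2 H2]]; [lra|].
 exists (Rmin d1 d2); split. apply Rmin_pos; auto.
 intros b' Hb'. assert (A1 : Rabs (F b' - F b) < eps/2).
 { apply H1. intros i Hi. eapply Rlt_le_trans. apply Hb'; auto. apply Rmin_l. }
 assert (A2 : Rabs (G b' - G b) < eps/2).
 { apply H2. intros i Hi. eapply Rlt_le_trans. apply Hb'; auto. apply Rmin_r. }
 replace (F b' + G b' - (F b + G b)) with ((F b' - F b) + (G b' - G b)) by ring.
 eapply Rle_lt_trans. apply Rabs_triang. lra. Qed.

Lemma vcont_comp p f F : (forall x, continuity_pt f x) -> vcont p F -> vcont p (fun b => f (F b)).
Proof. intros Hf HF b eps He. destruct (Hf (F b) eps He) as [a [Ha H1]].
 simpl in H1; unfold R_dist in H1.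
 destruct (HF b a Ha) as [d [Hd H2]]. exists d; split; auto. intros b' Hb'.
 destruct (Req_dec (F b') (F b)) as [E|E]. rewrite E, Rminus_diag, Rabs_R0; lra.
 apply H1. split. split. exact I. auto. apply H2; auto. Qed.

Lemma vcont_scal p c F : vcont p F -> vcont p (fun b => c * F b).
Proof. intros HF b eps He. destruct (HF b (eps / (Rabs c + 1))) as [d [Hd H1]].
 { apply Rdiv_lt_0_compat; auto. pose proof (Rabs_pos c); lra. }
 exists d; split; auto. intros b' Hb'. specialize (H1 b' Hb').
 replace (c * F b' - c * F b) with (c * (F b' - F b)) by ring. rewrite Rabs_mult.
 pose proof (Rabs_pos c). pose proof (Rabs_pos (F b' - F b)).
 apply Rle_lt_trans with (Rabs c * (eps / (Rabs c + 1))). apply Rmult_le_compat_l; lra.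
 apply Rlt_le_trans with ((Rabs c + 1) * (eps / (Rabs c + 1))). nra.
 right; field; lra. Qed.

Lemma vcont_rsum p m (Fs : nat -> vec -> R) : (forall j, (j < m)%nat -> vcont p (Fs j)) ->
  vcont p (fun b => rsum m (fun j => Fs j b)).
Proof. induction m; simpl; intros H. apply vcont_const.
 apply vcont_plus. apply IHm; intros; apply H; lia. apply H; lia. Qed.

Lemma vcont_ext p F G : vcont p F -> (forall b, F b = G b) -> vcont p G.
Proof. intros HF E b eps He. destruct (HF b eps He) as [d [Hd H]]. exists d; split; auto.
 intros; rewrite <- !E; auto. Qed.

Lemma vcont_mv p A i : vcont p (fun b => mv p A b i).
Proof. unfold mv. apply (vcont_rsum p p (fun l b => A i l * b l)). intros; apply vcont_scal, vcont_coord; auto. Qed.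

Lemma sq_cont x : continuity_pt (fun z => z * z) x.
Proof. apply derivable_continuous_pt. exists (1 * id x + id x * 1).
 change (derivable_pt_lim (id * id)%F x (1 * id x + id x * 1)).
 apply (derivable_pt_lim_mult id id x 1 1); apply derivable_pt_lim_id. Qed.

Lemma vcont_lq p q (G : vec -> vec) : 0 < q -> (forall i, (i < p)%nat -> vcont p (fun b => G b i)) ->
  vcont p (fun b => lqnorm p q (G b)).
Proof. intros Hq HG. unfold lqnorm. apply (vcont_comp p (fun s => powr s (/q))).
 intros; apply powr_cont; apply Rinv_0_lt_compat; auto.
 apply (vcont_rsum p p (fun i b => powr (Rabs (G b i)) q)). intros j Hj.
 apply (vcont_comp p (fun s => powr s q)). intros; apply powr_cont; auto.
 apply (vcont_comp p Rabs). apply Rcontinuity_abs. auto. Qed.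

Lemma vcont_dep p F b b' : vcont p F -> (forall i, (i < p)%nat -> b' i = b i) -> F b' = F b.
Proof. intros HF E. apply Rminus_diag_uniq. apply NNPP; intro Hne.
 assert (0 < Rabs (F b' - F b)) by (apply Rabs_pos_lt; auto).
 destruct (HF b (Rabs (F b' - F b)) H) as [d [Hd H1]].
 assert (Rabs (F b' - F b) < Rabs (F b' - F b)). apply H1. intros; rewrite E, Rminus_diag, Rabs_R0; auto.
 lra. Qed.


Fixpoint of_T (p : nat) : Tn p R -> vec :=
  match p return Tn p R -> vec with
  | O => fun _ _ => 0
  | S p' => fun x i => match i with O => fst x | S i' => of_T p' (snd x) i' end
  end.
Fixpoint to_T (p : nat) (b : vec) : Tn p R :=
  match p with O => tt | S p' => (b O, to_T p' (fun i => b (S i))) end.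
Fixpoint cst_T (p : nat) (c : R) : Tn p R :=
  match p with O => tt | S p' => (c, cst_T p' c) end.

Lemma of_to p b i : (i < p)%nat -> of_T p (to_T p b) i = b i.
Proof. revert b i; induction p; intros b i H; [lia|]. destruct i; simpl; auto.
 rewrite IHp; auto; lia. Qed.

Lemma bounded_of p B x : bounded_n p (cst_T p (-B)) (cst_T p B) x ->
  forall i, (i < p)%nat -> -B <= of_T p x i <= B.
Proof. induction p; simpl; intros H i Hi; [lia|]. destruct x as [x1 x2]. destruct H as [H1 H2].
 destruct i; simpl; auto. apply IHp; auto; lia. Qed.

Lemma bounded_to p B b : (forall i, (i < p)%nat -> -B <= b i <= B) ->
  bounded_n p (cst_T p (-B)) (cst_T p B) (to_T p b).
Proof. revert b; induction p; simpl; intros b H; auto. split. apply H; lia.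
 apply IHp. intros; apply H; lia. Qed.

Lemma close_of p d x t : close_n p d x t -> forall i, (i < p)%nat -> Rabs (of_T p x i - of_T p t i) < d.
Proof. induction p; simpl; intros H i Hi; [lia|]. destruct x as [x1 x2], t as [t1 t2].
 destruct H as [H1 H2]. destruct i; simpl; auto. apply IHp; auto; lia. Qed.

Lemma fold_min_pos (l : list R) : (forall x, In x l -> 0 < x) -> 0 < fold_right Rmin 1 l.
Proof. induction l; simpl; intros H; [lra|]. apply Rmin_pos; auto. Qed.
Lemma fold_min_le (l : list R) x : In x l -> fold_right Rmin 1 l <= x.
Proof. induction l; simpl; intros H; [tauto|]. destruct H. subst; apply Rmin_l.
 eapply Rle_trans. apply Rmin_r. auto. Qed.

Lemma abs_le_inv x B : Rabs x <= B -> -B <= x <= B.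
Proof. intros H. pose proof (Rle_abs x). pose proof (Rle_abs (-x)). rewrite Rabs_Ropp in H1. lra. Qed.

Lemma evt p B F : 0 <= B -> vcont p F -> (forall b, 0 <= F b) ->
  exists b, (forall i, (i < p)%nat -> Rabs (b i) <= B) /\
    forall b', (forall i, (i < p)%nat -> Rabs (b' i) <= B) -> F b <= F b'.
Proof. intros HB HF HF0. set (Box := fun b : vec => forall i, (i < p)%nat -> Rabs (b i) <= B).
 set (E := fun y => exists b, Box b /\ y = - F b).
 assert (Hb : bound E). { exists 0. intros y [b [_ ->]]. pose proof (HF0 b); lra. }
 assert (Hne : exists y, E y). { exists (- F (fun _ => 0)). exists (fun _ => 0). split; auto.
   intros i _. rewrite Rabs_R0; lra. }
 destruct (completeness E Hb Hne) as [L [HL1 HL2]]. set (m := - L).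
 assert (Hm : forall b, Box b -> m <= F b). { intros b Hbx. assert (E (- F b)) by (exists b; auto).
   apply HL1 in H. unfold m; lra. }
 assert (Hinf : forall e, 0 < e -> exists b, Box b /\ F b < m + e).
 { intros e He. apply NNPP; intro Hn.
   assert (L <= L - e). { apply HL2. intros y [b [Hbx ->]].
     destruct (Rle_lt_dec (m + e) (F b)). unfold m in *; lra. exfalso; apply Hn; exists b; auto. }
   lra. }
 destruct (classic (exists b, Box b /\ F b <= m)) as [[b [Hbx Hbm]]|Hno].
 { exists b; split; auto. intros b' Hb'. pose proof (Hm b' Hb'). lra. }
 assert (Hgt : forall b, Box b -> m < F b).
 { intros b Hbx. destruct (Rle_lt_dec (F b) m); auto. exfalso; apply Hno; exists b; auto. }
 assert (Hloc : forall t : Tn p R, exists de : R * R, 0 < fst de /\ 0 < snd de /\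
     (Box (of_T p t) -> forall x, Box x -> (forall i, (i < p)%nat -> Rabs (x i - of_T p t i) < fst de) ->
       m + snd de < F x)).
 { intros t. destruct (classic (Box (of_T p t))) as [Ht|Ht].
   - pose proof (Hgt _ Ht). destruct (HF (of_T p t) ((F (of_T p t) - m) / 2)) as [d [Hd H1]]; [lra|].
     exists (d, (F (of_T p t) - m) / 2). simpl. split; auto. split; [lra|].
     intros _ x Hx Hc. specialize (H1 x Hc). apply Rabs_def2 in H1. lra.
   - exists (1, 1). simpl. split; [lra|]. split; [lra|]. intros; tauto. }
 set (f := fun t => proj1_sig (constructive_indefinite_description _ (Hloc t))).
 assert (Hf : forall t, 0 < fst (f t) /\ 0 < snd (f t) /\
     (Box (of_T p t) -> forall x, Box x -> (forall i, (i < p)%nat -> Rabs (x i - of_T p t i) < fst (f t)) ->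
       m + snd (f t) < F x)).
 { intros t. unfold f. destruct (constructive_indefinite_description _ (Hloc t)); simpl; auto. }
 set (delta := fun t => mkposreal (fst (f t)) (proj1 (Hf t))).
 exfalso. apply (compactness_list p (cst_T p (-B)) (cst_T p B) delta). intros [l Hl].
 set (eta := fold_right Rmin 1 (map (fun t => snd (f t)) l)).
 assert (Heta : 0 < eta). { apply fold_min_pos. intros x Hx. apply in_map_iff in Hx.
   destruct Hx as [t [<- _]]. apply Hf. }
 destruct (Hinf eta Heta) as [x [Hx Hxm]].
 assert (Hbd : bounded_n p (cst_T p (-B)) (cst_T p B) (to_T p x)).
 { apply bounded_to. intros i Hi. apply abs_le_inv; auto. }
 destruct (Hl (to_T p x) Hbd) as [t [Htl [Htb Htc]]].
 assert (Hbt : Box (of_T p t)). { intros i Hi. apply Rabs_le. apply bounded_of with (i := i) in Htb; auto. }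
 assert (Hc : forall i, (i < p)%nat -> Rabs (x i - of_T p t i) < fst (f t)).
 { intros i Hi. apply close_of with (i := i) in Htc; auto. rewrite of_to in Htc; auto. }
 destruct (Hf t) as [_ [_ H3]]. specialize (H3 Hbt x Hx Hc).
 assert (eta <= snd (f t)). { apply fold_min_le. apply in_map_iff. exists t; auto. }
 lra. Qed.


Lemma quad_expand n (r w : vec) s :
  sqnorm2 n (fun i => r i - s * w i) = sqnorm2 n r + s * (-2 * dot n r w) + s * s * sqnorm2 n w.
Proof. unfold sqnorm2, dot.
 rewrite (rsum_ext n _ (fun i => (r i * r i + (s * -2) * (r i * w i)) + (s * s) * (w i * w i))) by (intros; ring).
 rewrite !rsum_plus, !rsum_scal. ring. Qed.

Lemma inner_deriv R0 Lc Qc : derivable_pt_lim (fun s => R0 + s * Lc + s * s * Qc) 0 Lc.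
Proof. intros eps He. assert (0 < eps / (Rabs Qc + 1)).
 { apply Rdiv_lt_0_compat; auto. pose proof (Rabs_pos Qc); lra. }
 exists (mkposreal _ H). simpl. intros h Hh Hlt.
 replace ((R0 + (0 + h) * Lc + (0 + h) * (0 + h) * Qc - (R0 + 0 * Lc + 0 * 0 * Qc)) / h - Lc) with (h * Qc)
   by (field; auto).
 rewrite Rabs_mult. pose proof (Rabs_pos Qc). pose proof (Rabs_pos h).
 apply Rle_lt_trans with (eps / (Rabs Qc + 1) * Rabs Qc). apply Rmult_le_compat_r; lra.
 apply Rlt_le_trans with (eps / (Rabs Qc + 1) * (Rabs Qc + 1)). apply Rmult_lt_compat_l; lra.
 right; field; lra. Qed.

Lemma deriv_quad (g g' : R -> R) R0 Lc Qc : derivable_pt_lim g R0 (g' R0) ->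
  forall e, 0 < e -> exists dl, 0 < dl /\ forall s, 0 < s < dl ->
    Rabs ((g (R0 + s * Lc + s * s * Qc) - g R0) / s - g' R0 * Lc) < e.
Proof. intros Hg e He.
 assert (H : derivable_pt_lim (fun s => g (R0 + s * Lc + s * s * Qc)) 0 (g' R0 * Lc)).
 { apply (derivable_pt_lim_comp (fun s => R0 + s * Lc + s * s * Qc) g 0 Lc (g' R0)).
   apply inner_deriv. replace (R0 + 0 * Lc + 0 * 0 * Qc) with R0 by ring. auto. }
 destruct (H e He) as [dl Hdl]. exists dl; split. apply cond_pos.
 intros s [Hs1 Hs2]. specialize (Hdl s). rewrite Rplus_0_l in Hdl.
 replace (R0 + 0 * Lc + 0 * 0 * Qc) with R0 in Hdl by ring. apply Hdl. lra.
 rewrite Rabs_pos_eq; lra. Qed.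


Definition Apen k p (a q : nat -> R) (M : nat -> mat) (b : vec) :=
  rsum k (fun j => a j * lqnorm p (q j) (mv p (M j) b)).

Definition cmb (s : R) (u w : vec) : vec := fun l => (1 - s) * u l + s * w l.

Lemma Apen_nonneg k p a q M b : (forall j, (j < k)%nat -> 0 <= a j) -> 0 <= Apen k p a q M b.
Proof. intros Ha. apply rsum_nonneg. intros j Hj. apply Rmult_le_pos; auto. apply lq_nonneg. Qed.

Lemma Apen_conv k p a q M u w s : (forall j, (j < k)%nat -> 0 <= a j) -> (forall j, (j < k)%nat -> 1 <= q j) ->
  0 <= s <= 1 -> Apen k p a q M (cmb s u w) <= (1 - s) * Apen k p a q M u + s * Apen k p a q M w.
Proof. intros Ha Hq Hs. unfold Apen. rewrite <- !rsum_scal, <- rsum_plus. apply rsum_le. intros j Hj.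
 rewrite (lq_ext p (q j) (mv p (M j) (cmb s u w)) (fun i => (1 - s) * mv p (M j) u i + s * mv p (M j) w i))
   by (intros; unfold cmb; apply mv_lin).
 pose proof (lq_triangle p (q j) (fun i => (1 - s) * mv p (M j) u i) (fun i => s * mv p (M j) w i) (Hq j Hj)).
 assert (0 < q j) by (specialize (Hq j Hj); lra).
 rewrite !lq_homog in H by (auto; lra).
 pose proof (Ha j Hj).
 replace ((1 - s) * (a j * lqnorm p (q j) (mv p (M j) u)) + s * (a j * lqnorm p (q j) (mv p (M j) w)))
   with (a j * ((1 - s) * lqnorm p (q j) (mv p (M j) u) + s * lqnorm p (q j) (mv p (M j) w))) by ring.
 apply Rmult_le_compat_l; lra. Qed.

Lemma Apen_zero k p a q M : (forall j, (j < k)%nat -> 0 < q j) -> Apen k p a q M (fun _ => 0) = 0.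
Proof. intros Hq. apply rsum_zero. intros j Hj.
 rewrite (lq_ext p (q j) _ (fun i => 0 * 0)). rewrite (lq_homog p (q j) 0 (fun _ => 0)) by (auto; lra). ring.
 intros i Hi. unfold mv. rewrite rsum_zero. ring. intros; ring. Qed.

Lemma Apen_vcont k p a q M : (forall j, (j < k)%nat -> 0 < q j) -> vcont p (Apen k p a q M).
Proof. intros Hq. unfold Apen. apply (vcont_rsum p k (fun j b => a j * lqnorm p (q j) (mv p (M j) b))).
 intros j Hj. apply vcont_scal. apply (vcont_lq p (q j) (fun b => mv p (M j) b)); auto.
 intros; apply vcont_mv. Qed.

Lemma resid_vcont n p X Y : vcont p (fun b => resid n p X Y b).
Proof. apply (vcont_ext p (fun b => rsum n (fun i => (fun z => z * z) (Y i + (-1) * mv p X b i)))).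
 - apply (vcont_rsum p n (fun i b => (fun z => z * z) (Y i + (-1) * mv p X b i))). intros i Hi.
   apply (vcont_comp p (fun z => z * z)). apply sq_cont. apply vcont_plus. apply vcont_const.
   apply vcont_scal, vcont_mv.
 - intros b. unfold resid, sqnorm2, dot. apply rsum_ext. intros; ring. Qed.

Lemma resid_expand n p X Y u w s :
  resid n p X Y (cmb s u w) = resid n p X Y u
    + s * (-2 * dot n (fun i => Y i - mv p X u i) (fun i => mv p X w i - mv p X u i))
    + s * s * sqnorm2 n (fun i => mv p X w i - mv p X u i).
Proof. unfold resid. rewrite <- quad_expand. apply sqnorm2_ext. intros i Hi. unfold cmb. rewrite mv_lin. ring. Qed.

Lemma coercive k p a q (M Mp P : nat -> mat) :
  (forall j, (j < k)%nat -> 0 < a j) -> (forall j, (j < k)%nat -> 0 < q j) ->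
  mat_eq p p (msum k (fun j => mm p (mm p (P j) (Mp j)) (M j))) idm ->
  exists K, 0 <= K /\ forall b i, (i < p)%nat -> Rabs (b i) <= K * Apen k p a q M b.
Proof. intros Ha Hq HPsum.
 set (C := fun j i => rsum p (fun l => Rabs (mm p (P j) (Mp j) i l))).
 assert (HC : forall j i, 0 <= C j i) by (intros; apply rsum_nonneg; intros; apply Rabs_pos).
 set (K := rsum k (fun j => rsum p (fun i => C j i / a j))).
 assert (HCa : forall j i, (j < k)%nat -> 0 <= C j i / a j).
 { intros j i Hj. unfold Rdiv. apply Rmult_le_pos; auto. left; apply Rinv_0_lt_compat; auto. }
 exists K. split.
 { apply rsum_nonneg. intros j Hj. apply rsum_nonneg. intros; auto. }
 intros b i Hi.
 assert (E : b i = rsum k (fun j => rsum p (fun l => mm p (P j) (Mp j) i l * mv p (M j) b l))).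
 { rewrite <- (rsum_delta p i b Hi).
   rewrite (rsum_ext p (fun m => idm i m * b m)
     (fun m => rsum k (fun j => rsum p (fun l => mm p (P j) (Mp j) i l * M j l m * b m)))).
   2:{ intros m Hm. rewrite <- (HPsum i m Hi Hm). unfold msum. rewrite Rmult_comm, <- rsum_scal.
       apply rsum_ext. intros j Hj. unfold mm at 1. rewrite <- rsum_scal. apply rsum_ext. intros; ring. }
   rewrite rsum_swap. apply rsum_ext. intros j Hj. rewrite rsum_swap. apply rsum_ext. intros l Hl.
   unfold mv. rewrite <- rsum_scal. apply rsum_ext. intros; ring. }
 rewrite E. eapply Rle_trans. apply rsum_abs. eapply Rle_trans.
 apply (rsum_le k _ (fun j => C j i * lqnorm p (q j) (mv p (M j) b))).
 { intros j Hj. eapply Rle_trans. apply rsum_abs. unfold C. rewrite Rmult_comm, <- rsum_scal.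
   apply rsum_le. intros l Hl. rewrite Rabs_mult. rewrite (Rmult_comm (Rabs (mm p (P j) (Mp j) i l))).
   apply Rmult_le_compat_r. apply Rabs_pos. apply lq_coord; auto. }
 unfold Apen. rewrite <- rsum_scal. apply rsum_le. intros j Hj.
 assert (C j i <= K * a j).
 { assert (C j i / a j <= K).
   { eapply Rle_trans. apply (rsum_term p (fun i => C j i / a j)); auto.
     apply (rsum_term k (fun j => rsum p (fun i => C j i / a j))); auto.
     intros; apply rsum_nonneg; auto. }
   pose proof (Ha j Hj). apply (Rmult_le_compat_r (a j)) in H; [|lra].
   unfold Rdiv in H. rewrite Rmult_assoc, Rinv_l in H by lra. lra. }
 rewrite <- Rmult_assoc. apply Rmult_le_compat_r. apply lq_nonneg. auto. Qed.


Theorem lemma1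
  (n p k : nat) (X : mat) (Y bstar eps : vec)
  (g g' : R -> R) (M Mp P : nat -> mat) (q c : nat -> R)
  (* model *)
  (HY : forall i, (i < n)%nat -> Y i = mv p X bstar i + eps i)
  (* link function *)
  (Hg_nonneg : forall x, 0 <= x -> 0 <= g x)
  (Hg0 : g 0 = 0)
  (Hg_cont : forall x, 0 <= x -> limit1_in g (fun y => 0 <= y) (g x) x)
  (Hg_incr : forall x y, 0 <= x -> x < y -> g x < g y)
  (Hg_deriv : forall x, 0 < x -> derivable_pt_lim g x (g' x))
  (Hg'_cont : forall x, 0 < x -> continuity_pt g' x)
  (Hg'_pos : forall x, 0 < x -> 0 < g' x)
  (Hg'_noninc : forall x y, 0 < x -> x <= y -> g' y <= g' x)
  (Hg_sconv : forall (a b : vec) (t : R),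
      (exists i, (i < n)%nat /\ a i <> b i) -> 0 < t < 1 ->
      g (sqnorm2 n (fun i => t * a i + (1 - t) * b i))
        < t * g (sqnorm2 n a) + (1 - t) * g (sqnorm2 n b))
  (* penalty *)
  (Hk : (1 <= k)%nat)
  (Hker : forall b : vec,
      (forall j, (j < k)%nat -> forall i, (i < p)%nat -> mv p (M j) b i = 0) ->
      forall i, (i < p)%nat -> b i = 0)
  (Hq : forall j, (j < k)%nat -> 1 <= q j)
  (HMp : forall j, (j < k)%nat -> is_pinv p p (M j) (Mp j))
  (HP : forall j, (j < k)%nat -> mat_eq p p (mm p (P j) (P j)) (P j))
  (HPsum : mat_eq p p (msum k (fun j => mm p (mm p (P j) (Mp j)) (M j))) idm)
  (* noise assumption (realization-wise) *)
  (HY0 : exists i, (i < n)%nat /\ Y i <> 0)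
  (Hnoise : forall j, (j < k)%nat ->
      0 < dualnorm p (q j) (mv n (tr (mm p (mm p X (P j)) (Mp j))) eps))
  (* constants *)
  (Hc : forall j, (j < k)%nat -> 0 < c j) :
  exists lam : vec,
    (forall j, (j < k)%nat -> 0 < lam j) /\
    (exists b : vec, is_minimizer n p k g X Y M q lam b) /\
    (forall b : vec, is_minimizer n p k g X Y M q lam b ->
       0 < resid n p X Y b /\
       forall j, (j < k)%nat ->
         lam j / (2 * g' (resid n p X Y b))
         = c j * dualnorm p (q j) (mv n (tr (mm p (mm p X (P j)) (Mp j))) eps)).
Proof.
  set (d := fun j => dualnorm p (q j) (mv n (tr (mm p (mm p X (P j)) (Mp j))) eps)).
  set (a := fun j => c j * d j).
  assert (Ha : forall j, (j < k)%nat -> 0 < a j).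
  { intros j Hj. unfold a, d. apply Rmult_lt_0_compat; auto. }
  assert (Ha' : forall j, (j < k)%nat -> 0 <= a j) by (intros j Hj; left; auto).
  assert (Hqp : forall j, (j < k)%nat -> 0 < q j) by (intros j Hj; specialize (Hq j Hj); lra).
  set (Ap := Apen k p a q M).
  set (Rs := fun b => resid n p X Y b).
  set (Phi := fun b => Rs b / 2 + Ap b).
  set (rv := fun b i => Y i - mv p X b i).
  assert (HRs0 : forall b, 0 <= Rs b) by (intros; apply sqnorm2_nonneg).
  assert (HA0 : forall b, 0 <= Ap b) by (intros; apply Apen_nonneg; auto).
  assert (HPhi0 : forall b, 0 <= Phi b) by (intros b; unfold Phi; pose proof (HRs0 b); pose proof (HA0 b); lra).
  destruct (coercive k p a q M Mp P Ha Hqp HPsum) as [K [HK Hcoer]]. fold Ap in Hcoer.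
  assert (HPhic : vcont p Phi).
  { apply (vcont_ext p (fun b => /2 * Rs b + Ap b)). apply vcont_plus. apply vcont_scal. apply resid_vcont.
    apply Apen_vcont; auto. intros b; unfold Phi; lra. }
  set (B := K * Phi (fun _ => 0)).
  assert (HB : 0 <= B) by (apply Rmult_le_pos; auto).
  destruct (evt p B Phi HB HPhic HPhi0) as [bs [Hbox Hmin0]].
  assert (Hmin : forall b, Phi bs <= Phi b).
  { intros b. destruct (classic (forall i, (i < p)%nat -> Rabs (b i) <= B)) as [Hb|Hb]. apply Hmin0; auto.
    apply not_all_ex_not in Hb. destruct Hb as [i Hi].
    apply imply_to_and in Hi. destruct Hi as [Hi Hi2]. apply Rnot_le_lt in Hi2.
    assert (Phi bs <= Phi (fun _ => 0)). { apply Hmin0. intros; rewrite Rabs_R0; auto. }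
    destruct (Rle_lt_dec (Phi b) (Phi (fun _ => 0))) as [Hle|Hlt]; [|lra].
    exfalso. pose proof (Hcoer b i Hi).
    assert (K * Ap b <= K * Phi (fun _ => 0)).
    { apply Rmult_le_compat_l; auto. unfold Phi in *. pose proof (HRs0 b). lra. }
    unfold B in Hi2. lra. }
  assert (HRpos : 0 < Rs bs).
  { destruct (HRs0 bs) as [?|HR0]; auto. exfalso.
    assert (Hrv : forall i, (i < n)%nat -> rv bs i = 0).
    { intros i Hi. assert (rv bs i * rv bs i <= Rs bs).
      { apply (rsum_term n (fun i => rv bs i * rv bs i)); auto. intros; apply Rle_0_sqr. }
      pose proof (Rle_0_sqr (rv bs i)). unfold Rsqr in H0.
      assert (rv bs i * rv bs i = 0) by lra. apply Rmult_integral in H1; tauto. }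
    destruct HY0 as [i0 [Hi0 HY0']].
    assert (Hl : exists l, (l < p)%nat /\ bs l <> 0).
    { apply NNPP; intro Hn. apply HY0'. pose proof (Hrv i0 Hi0). unfold rv in H.
      assert (mv p X bs i0 = 0). { unfold mv. apply rsum_zero. intros l Hl.
        destruct (Req_dec (bs l) 0) as [E|E]. rewrite E; ring. exfalso; apply Hn; exists l; auto. }
      lra. }
    destruct Hl as [l [Hl Hbl]].
    assert (HApos : 0 < Ap bs).
    { pose proof (Hcoer bs l Hl). pose proof (Rabs_pos_lt _ Hbl). destruct (HA0 bs) as [?|E]; auto.
      rewrite <- E in H. lra. }
    set (Qc := sqnorm2 n (fun i => mv p X (fun _ => 0) i - mv p X bs i)).
    assert (HQ : 0 <= Qc) by apply sqnorm2_nonneg.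
    set (s := Rmin 1 (Ap bs / (Qc + 1))).
    assert (Hs0 : 0 < s). { apply Rmin_pos; [lra|]. apply Rdiv_lt_0_compat; lra. }
    assert (Hs1 : s <= 1) by apply Rmin_l.
    assert (Hs2 : s <= Ap bs / (Qc + 1)) by apply Rmin_r.
    pose proof (Hmin (cmb s bs (fun _ => 0))) as Hm.
    unfold Phi, Rs in Hm. rewrite resid_expand in Hm. fold Qc in Hm.
    assert (Hd0 : dot n (fun i => Y i - mv p X bs i) (fun i => mv p X (fun _ => 0) i - mv p X bs i) = 0).
    { apply rsum_zero. intros i Hi. pose proof (Hrv i Hi). unfold rv in H. rewrite H; ring. }
    rewrite Hd0 in Hm.
    pose proof (Apen_conv k p a q M bs (fun _ => 0) s Ha' Hq (conj (Rlt_le _ _ Hs0) Hs1)).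
    rewrite Apen_zero in H by auto. fold Ap in H. idtac.
    change (resid n p X Y bs) with (Rs bs) in Hm. rewrite <- HR0 in Hm. assert (s * Ap bs <= s * s * Qc / 2) by lra.
    assert (Ap bs <= s * Qc / 2).
    { apply (Rmult_le_reg_l s); auto. lra. }
    assert (s * (Qc + 1) <= Ap bs).
    { apply (Rmult_le_compat_r (Qc + 1)) in Hs2; [|lra]. unfold Rdiv in Hs2.
      rewrite Rmult_assoc, Rinv_l in Hs2 by lra. lra. }
    nra. }

  set (R0 := Rs bs).
  set (t := 2 * g' R0).
  assert (Ht : 0 < t) by (unfold t; pose proof (Hg'_pos R0 HRpos); lra).
  set (lam := fun j => t * a j).
  set (Hf := fun b => g (Rs b) + t * Ap b).
  assert (HobjE : forall b, objective n p k g X Y M q lam b = Hf b).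
  { intros b. unfold objective, Hf, Ap, Apen, Rs, lam. rewrite <- rsum_scal. f_equal.
    apply rsum_ext; intros; ring. }
  assert (Hrvc : forall u w s i, (i < n)%nat -> rv (cmb s u w) i = s * rv w i + (1 - s) * rv u i).
  { intros u w s i Hi. unfold rv, cmb. rewrite mv_lin. ring. }
  assert (HRsc : forall u w s, Rs (cmb s u w) = sqnorm2 n (fun i => s * rv w i + (1 - s) * rv u i)).
  { intros u w s. unfold Rs, resid. apply sqnorm2_ext. intros i Hi. apply Hrvc; auto. }
  assert (Hgstrict : forall u w s, 0 < s < 1 -> (exists i, (i < n)%nat /\ rv w i <> rv u i) ->
      g (Rs (cmb s u w)) < s * g (Rs w) + (1 - s) * g (Rs u)).
  { intros u w s Hs Hex. rewrite HRsc. apply Hg_sconv; auto. }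
  assert (Hgconv : forall u w s, 0 < s < 1 ->
      g (Rs (cmb s u w)) <= s * g (Rs w) + (1 - s) * g (Rs u)).
  { intros u w s Hs. destruct (classic (exists i, (i < n)%nat /\ rv w i <> rv u i)) as [Hex|Hn].
    left; apply Hgstrict; auto.
    assert (E : forall i, (i < n)%nat -> rv w i = rv u i).
    { intros i Hi. apply NNPP; intro; apply Hn; exists i; auto. }
    assert (E1 : Rs (cmb s u w) = Rs u).
    { rewrite HRsc. unfold Rs, resid. apply sqnorm2_ext. intros i Hi. rewrite E by auto. unfold rv. ring. }
    assert (E2 : Rs w = Rs u). { unfold Rs, resid. apply sqnorm2_ext. intros i Hi. apply E; auto. }
    rewrite E1, E2. lra. }
  assert (Hmin3 : forall b, Hf bs <= Hf b).
  { intros b. set (D := Hf b - Hf bs).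
    set (Lc := -2 * dot n (fun i => Y i - mv p X bs i) (fun i => mv p X b i - mv p X bs i)).
    set (Qc := sqnorm2 n (fun i => mv p X b i - mv p X bs i)).
    assert (HQ : 0 <= Qc) by apply sqnorm2_nonneg.
    assert (Key : forall s, 0 < s < 1 ->
       (g (R0 + s * Lc + s * s * Qc) - g R0) / s - g' R0 * Lc - g' R0 * s * Qc <= D).
    { intros s Hs. pose proof (Hgconv bs b s Hs) as G1.
      pose proof (Apen_conv k p a q M bs b s Ha' Hq (conj (Rlt_le _ _ (proj1 Hs)) (Rlt_le _ _ (proj2 Hs)))) as G2.
      fold Ap in G2. pose proof (Hmin (cmb s bs b)) as G3. unfold Phi in G3.
      assert (E : Rs (cmb s bs b) = R0 + s * Lc + s * s * Qc) by (unfold Rs; rewrite resid_expand; auto).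
      rewrite E in G1, G3. fold R0 in G3.
      assert (G4 : g (R0 + s * Lc + s * s * Qc) - g R0 - t / 2 * (s * Lc + s * s * Qc) <= s * D).
      { unfold D, Hf. fold R0.
        assert (t * Ap (cmb s bs b) <= t * ((1 - s) * Ap bs + s * Ap b)) by (apply Rmult_le_compat_l; lra).
        assert (t * (R0 / 2 + Ap bs) <= t * ((R0 + s * Lc + s * s * Qc) / 2 + Ap (cmb s bs b))) by (apply Rmult_le_compat_l; lra).
        change (Rs bs) with R0 in G1. lra. }
      apply (Rmult_le_reg_l s). lra.
      replace (s * ((g (R0 + s * Lc + s * s * Qc) - g R0) / s - g' R0 * Lc - g' R0 * s * Qc))
        with (g (R0 + s * Lc + s * s * Qc) - g R0 - t / 2 * (s * Lc + s * s * Qc)) by (unfold t; field; lra).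
      auto. }
    destruct (Rle_lt_dec 0 D) as [HD|HD]. unfold D in HD; lra. exfalso.
    set (e := - D / 4).
    assert (He : 0 < e) by (unfold e; lra).
    destruct (deriv_quad g g' R0 Lc Qc (Hg_deriv R0 HRpos) e He) as [dl [Hdl Hder]].
    assert (Hgp : 0 < g' R0) by (apply Hg'_pos; auto).
    set (s := Rmin (Rmin (dl / 2) (1 / 2)) (e / (g' R0 * Qc + 1))).
    assert (Hgq : 0 <= g' R0 * Qc) by (apply Rmult_le_pos; lra).
    assert (Hs0 : 0 < s). { apply Rmin_pos. apply Rmin_pos; lra. apply Rdiv_lt_0_compat; lra. }
    assert (Hs1 : s <= dl / 2) by (eapply Rle_trans; [apply Rmin_l| apply Rmin_l]).
    assert (Hs2 : s <= 1 / 2) by (eapply Rle_trans; [apply Rmin_l| apply Rmin_r]).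
    assert (Hs3 : s <= e / (g' R0 * Qc + 1)) by apply Rmin_r.
    assert (Hs4 : g' R0 * s * Qc <= e).
    { apply (Rmult_le_compat_r (g' R0 * Qc + 1)) in Hs3; [|lra]. unfold Rdiv in Hs3.
      rewrite Rmult_assoc, Rinv_l in Hs3 by lra. nra. }
    assert (Hs5 : 0 < s < 1) by lra. assert (Hs6 : 0 < s < dl) by lra.
    specialize (Key s Hs5). specialize (Hder s Hs6). apply Rabs_def2 in Hder.
    unfold e in *. lra. }
  exists lam. split.
  { intros j Hj. unfold lam. apply Rmult_lt_0_compat; auto. }
  split.
  { exists bs. intros b'. rewrite !HobjE. apply Hmin3. }
  intros b Hb.
  assert (Hbb : Hf b <= Hf bs) by (rewrite <- !HobjE; apply Hb).
  assert (Hrveq : forall i, (i < n)%nat -> rv b i = rv bs i).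
  { apply NNPP; intro Hn. apply not_all_ex_not in Hn. destruct Hn as [i Hi].
    apply imply_to_and in Hi. destruct Hi as [Hi Hi2].
    assert (Hs : 0 < 1/2 < 1) by lra.
    assert (Hex : exists i, (i < n)%nat /\ rv b i <> rv bs i) by (exists i; auto).
    assert (Hs' : 0 <= 1/2 <= 1) by lra.
    pose proof (Hgstrict bs b (1/2) Hs Hex) as G1.
    pose proof (Apen_conv k p a q M bs b (1/2) Ha' Hq Hs') as G2. fold Ap in G2.
    pose proof (Hmin3 (cmb (1/2) bs b)) as G3. unfold Hf in G3, Hbb.
    nra. }
  assert (ERs : Rs b = R0).
  { unfold R0, Rs, resid. apply sqnorm2_ext. intros i Hi. apply Hrveq; auto. }
  change (resid n p X Y b) with (Rs b). rewrite ERs. split; auto.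
  intros j Hj. unfold lam, t. fold (a j). unfold a. fold (d j). field.
  pose proof (Hg'_pos R0 HRpos); lra.
Qed.
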